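(* Let $A\in\mathbb{R}^{n\times n}$ be symmetric, $\beta>0$, $f(\mathbf{z})=\frac12\mathbf{z}^TA\mathbf{z}+\frac{\beta}{2}\sum_kz_k^4$ on $\mathbb{S}^{n-1}$. Let $\nu\in(0,1]$, $\mathbf{z}_0\in\mathbb{S}^{n-1}$ and $\mathcal{R}_\nu=\{\mathbf{z}\in\mathbb{S}^{n-1}:\|\mathbf{z}-\mathbf{z}_0\|^2\le\nu\}$. If $H_f(\mathbf{z})[\mathbf{v}]>0$ for all $\mathbf{v}\in\mathcal{T}_{\mathbf{z}}\setminus\{0\}$ and all $\mathbf{z}\in\mathcal{R}_\nu$, then the problem $\min_{\mathbf{z}\in\mathcal{R}_\nu}f(\mathbf{z})$ has at most one local minimizer.
   Context: $\mathbb{S}^{n-1}$ is the unit sphere in $\mathbb{R}^n$; $\mathcal{T}_{\mathbf{z}}=\{\mathbf{v}\in\mathbb{R}^n:\mathbf{v}^T\mathbf{z}=0\}$; $H_f(\mathbf{z})[\mathbf{v}]=\mathbf{v}^T[A+6\beta\,\mathrm{diag}(z_1^2,\dots,z_n^2)-2\lambda I]\mathbf{v}$ with $2\lambda=\mathbf{z}^TA\mathbf{z}+2\beta\|\mathbf{z}\|_4^4$ (the Riemannian Hessian quadratic form). *)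

(* Defs.v *)
From mathcomp Require Import all_boot all_order all_algebra.
From mathcomp Require Import reals.
Set Implicit Arguments. Unset Strict Implicit. Unset Printing Implicit Defensive.
Import Order.TTheory GRing.Theory Num.Theory.
Local Open Scope ring_scope.

Section Defs.
Variables (R : realType) (n : nat).

Definition sqnorm (z : 'cV[R]_n) : R := \sum_(i < n) z i 0 ^+ 2.
Definition enorm (z : 'cV[R]_n) : R := Num.sqrt (sqnorm z).
Definition norm4_4 (z : 'cV[R]_n) : R := \sum_(i < n) z i 0 ^+ 4.
Definition qform (M : 'M[R]_n) (v : 'cV[R]_n) : R := (v^T *m M *m v) 0 0.

Definition on_sphere (z : 'cV[R]_n) : Prop := enorm z = 1.
Definition tangent (z v : 'cV[R]_n) : Prop := (v^T *m z) 0 0 = 0.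

Definition fobj (A : 'M[R]_n) (beta : R) (z : 'cV[R]_n) : R :=
  qform A z / 2 + beta / 2 * norm4_4 z.

Definition two_lambda (A : 'M[R]_n) (beta : R) (z : 'cV[R]_n) : R :=
  qform A z + 2 * beta * norm4_4 z.

Definition hessf (A : 'M[R]_n) (beta : R) (z v : 'cV[R]_n) : R :=
  qform (A + (6 * beta) *: diag_mx (\row_i (z i 0 ^+ 2)) - (two_lambda A beta z)%:M) v.

Definition region (z0 : 'cV[R]_n) (nu : R) (z : 'cV[R]_n) : Prop :=
  on_sphere z /\ enorm (z - z0) ^+ 2 <= nu.

Definition local_minimizer (S : 'cV[R]_n -> Prop) (g : 'cV[R]_n -> R)
  (z : 'cV[R]_n) : Prop :=
  S z /\ exists eps : R, 0 < eps /\
    forall w, S w -> enorm (w - z) < eps -> g z <= g w.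

End Defs.

(* Main.v *)
Require Import Defs.
From mathcomp Require Import all_boot all_order all_algebra.
From mathcomp Require Import reals.
From mathcomp Require Import all_classical all_analysis.
From mathcomp Require Import ring lra.
Import Order.TTheory GRing.Theory Num.Theory.
Import numFieldNormedType.Exports.
Local Open Scope ring_scope.
Local Open Scope classical_set_scope.
Set Implicit Arguments. Unset Strict Implicit. Unset Printing Implicit Defensive.
Section Alg.
Variables (R : realType) (n : nat).
Implicit Types (x y z v w : 'cV[R]_n) (M : 'M[R]_n) (a b : R).

Definition dot x y : R := \sum_(i < n) x i 0 * y i 0.
Definition bil M x y : R := \sum_(j < n) (\sum_(i < n) x i 0 * M i j) * y j 0.
Definition q4 x y (p : nat) : R := \sum_(i < n) x i 0 ^+ p * y i 0 ^+ (4 - p).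

Lemma sqnormE x : sqnorm x = dot x x.
Proof. by apply: eq_bigr => i _; rewrite expr2. Qed.

Lemma dot_ge0 x : 0 <= dot x x.
Proof. by apply: sumr_ge0 => i _; rewrite -expr2 sqr_ge0. Qed.

Lemma dotC x y : dot x y = dot y x.
Proof. by apply: eq_bigr => i _; rewrite mulrC. Qed.

Lemma dot_combl a b x y w : dot (a *: x + b *: y) w = a * dot x w + b * dot y w.
Proof.
rewrite /dot !mulr_sumr -big_split /=; apply: eq_bigr => i _; rewrite !mxE; ring.
Qed.

Lemma dot_comb a b a' b' x y :
  dot (a *: x + b *: y) (a' *: x + b' *: y) =
  a * a' * dot x x + b * b' * dot y y + (a * b' + a' * b) * dot x y.
Proof.
rewrite dot_combl ![dot _ (_ + _)]dotC !dot_combl (dotC y x); ring.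
Qed.

Lemma dot_eq0 x : dot x x = 0 -> x = 0.
Proof.
move=> h; apply/matrixP => i j; rewrite ord1 mxE.
have H : sqnorm x = 0 by rewrite sqnormE.
move/psumr_eq0P: H => H.
have := H (fun k _ => sqr_ge0 _) i isT; by move/eqP; rewrite sqrf_eq0 => /eqP.
Qed.

Lemma qformE M w : qform M w = bil M w w.
Proof.
rewrite /qform /bil !mxE; apply: eq_bigr => j _; rewrite !mxE; congr (_ * _).
by apply: eq_bigr => i _; rewrite !mxE.
Qed.

Lemma bil_comb M a b x y :
  bil M (a *: x + b *: y) (a *: x + b *: y) =
  a ^+ 2 * bil M x x + a * b * (bil M x y + bil M y x) + b ^+ 2 * bil M y y.
Proof.
rewrite /bil.
have inner j : \sum_(i < n) (a *: x + b *: y) i 0 * M i j =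
   a * (\sum_(i < n) x i 0 * M i j) + b * (\sum_(i < n) y i 0 * M i j).
  by rewrite !mulr_sumr -big_split /=; apply: eq_bigr => i _; rewrite !mxE; ring.
under eq_bigr => j _ do rewrite inner.
rewrite [in RHS]mulrDr ![in RHS]mulr_sumr -![in RHS]big_split /=.
apply: eq_bigr => j _; rewrite !mxE; ring.
Qed.

Lemma q4_comb a b x y :
  norm4_4 (a *: x + b *: y) =
  a ^+ 4 * q4 x y 4 + 4 * a ^+ 3 * b * q4 x y 3 + 6 * a ^+ 2 * b ^+ 2 * q4 x y 2
  + 4 * a * b ^+ 3 * q4 x y 1 + b ^+ 4 * q4 x y 0.
Proof.
rewrite /norm4_4 /q4 !mulr_sumr -!big_split /=; apply: eq_bigr => i _; rewrite !mxE; ring.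
Qed.

Lemma fobj_comb A beta a b x y :
  fobj A beta (a *: x + b *: y) =
  (a ^+ 2 * bil A x x + a * b * (bil A x y + bil A y x) + b ^+ 2 * bil A y y) / 2
  + beta / 2 * (a ^+ 4 * q4 x y 4 + 4 * a ^+ 3 * b * q4 x y 3 + 6 * a ^+ 2 * b ^+ 2 * q4 x y 2
  + 4 * a * b ^+ 3 * q4 x y 1 + b ^+ 4 * q4 x y 0).
Proof. by rewrite /fobj qformE bil_comb q4_comb. Qed.

Lemma fobjE A beta z : fobj A beta z = bil A z z / 2 + beta / 2 * q4 z z 4.
Proof.
rewrite /fobj qformE /q4 /norm4_4; congr (_ + _ * _); apply: eq_bigr => i _.
by rewrite expr0 mulr1.
Qed.

Lemma qformD M1 M2 w : qform (M1 + M2) w = qform M1 w + qform M2 w.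
Proof. by rewrite /qform mulmxDr mulmxDl mxE. Qed.

Lemma qformB M1 M2 w : qform (M1 - M2) w = qform M1 w - qform M2 w.
Proof. by rewrite /qform mulmxBr mulmxBl !mxE. Qed.

Lemma qformZ k M w : qform (k *: M) w = k * qform M w.
Proof. by rewrite /qform -scalemxAr -scalemxAl mxE. Qed.

Lemma qform_diag (r : 'rV[R]_n) w : qform (diag_mx r) w = \sum_(i < n) r 0 i * w i 0 ^+ 2.
Proof.
rewrite /qform mul_mx_diag mxE; apply: eq_bigr => i _; rewrite !mxE; ring.
Qed.

Lemma qform_scalar k w : qform k%:M w = k * dot w w.
Proof.
rewrite /qform mul_mx_scalar -scalemxAl mxE /dot mxE.
by congr (_ * _); apply: eq_bigr => i _; rewrite !mxE.
Qed.

Lemma hessfE A beta z v :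
  hessf A beta z v = bil A v v + 6 * beta * q4 z v 2
     - (bil A z z + 2 * beta * q4 z z 4) * dot v v.
Proof.
rewrite /hessf qformB qformD qformZ qform_diag qform_scalar /two_lambda !qformE.
rewrite /q4 /norm4_4; congr (_ + _ * _ - (_ + _ * _) * _).
  by apply: eq_bigr => i _; rewrite mxE.
by apply: eq_bigr => i _; rewrite expr0 mulr1.
Qed.

Lemma tangentE z v : tangent z v <-> dot v z = 0.
Proof.
rewrite /tangent mxE /dot; suff -> : \sum_j v^T 0 j * z j 0 = \sum_(i < n) v i 0 * z i 0 by [].
by apply: eq_bigr => i _; rewrite mxE.
Qed.

Lemma key_identity A beta z v C S :
  C ^+ 2 + S ^+ 2 = 1 -> dot v v = 1 ->
  fobj A beta (C *: z + S *: v) + fobj A beta (C *: z + (- S) *: v) - 2 * fobj A beta z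
  = S ^+ 2 * (hessf A beta z v + beta * S ^+ 2 * (q4 z v 4 - 6 * q4 z v 2 + q4 z v 0)).
Proof.
move=> hCS hv; rewrite !fobj_comb fobjE hessfE hv.
have -> : q4 z z 4 = q4 z v 4.
  by apply: eq_bigr => i _; rewrite !expr0.
apply/eqP; rewrite -subr_eq0; apply/eqP.
transitivity ((C ^+ 2 + S ^+ 2 - 1) * (bil A z z + beta * q4 z v 4 * (C ^+ 2 - S ^+ 2 + 1) + 6 * beta * q4 z v 2 * S ^+ 2)).
  by field.
by rewrite hCS subrr !mul0r.
Qed.

End Alg.
Section Geo.
Variables (R : realType) (n : nat).
Implicit Types (x y z v w : 'cV[R]_n) (a b : R).

Lemma enorm_sq x : enorm x ^+ 2 = dot x x.
Proof. by rewrite /enorm sqr_sqrtr sqnormE // dot_ge0. Qed.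

Lemma on_sphereE z : on_sphere z <-> dot z z = 1.
Proof.
split => [h | h]; first by rewrite -enorm_sq h expr1n.
by rewrite /on_sphere /enorm sqnormE h sqrtr1.
Qed.

Lemma dot_sub x y : dot (x - y) (x - y) = dot x x + dot y y - 2 * dot x y.
Proof.
have -> : x - y = 1 *: x + (-1) *: y by rewrite scale1r scaleN1r.
by rewrite dot_comb; ring.
Qed.

Lemma dot0l w : dot 0 w = 0.
Proof. by rewrite /dot big1 // => i _; rewrite mxE mul0r. Qed.

Lemma region_iff z0 nu z : dot z0 z0 = 1 ->
  region z0 nu z <-> dot z z = 1 /\ 2 - 2 * dot z z0 <= nu.
Proof.
move=> h0; rewrite /region on_sphereE enorm_sq dot_sub h0.
split => [[h1 h2] | [h1 h2]]; split => //.
  by move: h2; rewrite h1.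
by rewrite h1.
Qed.

Lemma enorm_lt x e : 0 < e -> dot x x < e ^+ 2 -> enorm x < e.
Proof.
move=> e0 h; rewrite /enorm sqnormE -(gtr0_norm e0) -sqrtr_sqr ltr_sqrt //.
by rewrite exprn_gt0.
Qed.

Lemma comb_shift C S a b a' b' x y :
  C *: (a *: x + b *: y) + S *: (a' *: x + b' *: y) =
  (C * a + S * a') *: x + (C * b + S * b') *: y.
Proof. by apply/matrixP => i j; rewrite !mxE; ring. Qed.

End Geo.
Section Arc.
Variables (R : realType) (th : R).
Hypothesis s0 : sin th != 0.

Definition ga (t : R) := sin (th - t) / sin th.
Definition gb (t : R) := sin t / sin th.
Definition ga' (t : R) := - cos (th - t) / sin th.
Definition gb' (t : R) := cos t / sin th.

Lemma arc_norm t : ga t * ga t * 1 + gb t * gb t * 1 + (ga t * gb t + ga t * gb t) * cos th = 1.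
Proof.
rewrite /ga /gb sinB.
have E1 := cos2Dsin2 t; have E2 := cos2Dsin2 th.
apply/eqP; rewrite -subr_eq0; apply/eqP.
transitivity ((sin th ^+ 2 * (cos t ^+ 2 + sin t ^+ 2 - 1)
   - sin t ^+ 2 * (cos th ^+ 2 + sin th ^+ 2 - 1)) / sin th ^+ 2).
  by field.
by rewrite E1 E2 !subrr !mulr0 subrr mul0r.
Qed.

Lemma arc_dnorm t : ga' t * ga' t * 1 + gb' t * gb' t * 1 + (ga' t * gb' t + ga' t * gb' t) * cos th = 1.
Proof.
rewrite /ga' /gb' cosB.
have E1 := cos2Dsin2 t; have E2 := cos2Dsin2 th.
apply/eqP; rewrite -subr_eq0; apply/eqP.
transitivity ((sin th ^+ 2 * (cos t ^+ 2 + sin t ^+ 2 - 1)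
   - cos t ^+ 2 * (cos th ^+ 2 + sin th ^+ 2 - 1)) / sin th ^+ 2).
  by field.
by rewrite E1 E2 !subrr !mulr0 subrr mul0r.
Qed.

Lemma arc_orth t : ga' t * ga t * 1 + gb' t * gb t * 1 + (ga' t * gb t + ga t * gb' t) * cos th = 0.
Proof.
rewrite /ga /gb /ga' /gb' cosB sinB.
have E2 := cos2Dsin2 th.
transitivity (- (cos t * sin t * (cos th ^+ 2 + sin th ^+ 2 - 1)) / sin th ^+ 2).
  by field.
by rewrite E2 !subrr !mulr0 oppr0 mul0r.
Qed.

Lemma arc_dz1 t : ga t * 1 + gb t * cos th = cos t.
Proof. by rewrite /ga /gb sinB; field. Qed.

Lemma arc_dz2 t : ga t * cos th + gb t * 1 = cos (th - t).
Proof.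
rewrite /ga /gb sinB cosB.
have E2 := cos2Dsin2 th.
apply/eqP; rewrite -subr_eq0; apply/eqP.
transitivity (- (sin t * (cos th ^+ 2 + sin th ^+ 2 - 1)) / sin th).
  by field.
by rewrite E2 !subrr !mulr0 oppr0 mul0r.
Qed.

Lemma ga_shiftD t r : ga (t + r) = cos r * ga t + sin r * ga' t.
Proof.
by rewrite /ga /ga' opprD addrA (sinB (th - t) r); field.
Qed.

Lemma gb_shiftD t r : gb (t + r) = cos r * gb t + sin r * gb' t.
Proof. by rewrite /gb /gb' (sinD t r); field. Qed.

Lemma ga_shiftB t r : ga (t - r) = cos r * ga t + (- sin r) * ga' t.
Proof.
rewrite /ga /ga' (_ : th - (t - r) = th - t + r); last by ring.
by rewrite (sinD (th - t) r); field.
Qed.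

Lemma gb_shiftB t r : gb (t - r) = cos r * gb t + (- sin r) * gb' t.
Proof. by rewrite /gb /gb' (sinB t r); field. Qed.

Lemma ga0 : ga 0 = 1. Proof. by rewrite /ga subr0 divff. Qed.
Lemma gb0 : gb 0 = 0. Proof. by rewrite /gb sin0 mul0r. Qed.
Lemma gath : ga th = 0. Proof. by rewrite /ga subrr sin0 mul0r. Qed.
Lemma gbth : gb th = 1. Proof. by rewrite /gb divff. Qed.

End Arc.
Section Cont.
Variable R : realType.

Lemma near0 (f : R -> R) y : f x @[x --> (0:R)] --> y ->
  forall e, 0 < e -> exists2 d, 0 < d & forall u, `|u| < d -> `|f u - y| < e.
Proof.
move=> /cvgrPdist_lt H e e0.
have := H e e0 => /nbhs_ballP [d /= d0 Hd].
exists d => // u hu; rewrite distrC; apply: Hd.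
by rewrite -ball_normE /= sub0r normrN.
Qed.

Lemma contX (u : R -> R) k : continuous u -> continuous (fun t => u t ^+ k).
Proof.
move=> cu t.
exact: (@continuous_comp _ _ _ u (fun x => x ^+ k) t (cu t) (@exprn_continuous R k (u t))).
Qed.

Lemma cD (f g : R -> R) : continuous f -> continuous g -> continuous (fun t => f t + g t).
Proof. by move=> cf cg t; apply: cvgD; [exact: cf | exact: cg]. Qed.
Lemma cM (f g : R -> R) : continuous f -> continuous g -> continuous (fun t => f t * g t).
Proof. by move=> cf cg t; apply: cvgM; [exact: cf | exact: cg]. Qed.
Lemma cC (k : R) : continuous (fun _ : R => k).
Proof. by move=> t; exact: cvg_cst. Qed.

Lemma cont_poly (u w : R -> R) (k1 k2 k3 k4 k5 k6 k7 k8 k9 : R) :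
  continuous u -> continuous w ->
  continuous (fun t => (u t ^+ 2 * k1 + u t * w t * k2 + w t ^+ 2 * k3) / 2
     + k4 / 2 * (u t ^+ 4 * k5 + 4 * u t ^+ 3 * w t * k6 + 6 * u t ^+ 2 * w t ^+ 2 * k7
     + 4 * u t * w t ^+ 3 * k8 + w t ^+ 4 * k9)).
Proof.
move=> cu cw.
have c2u := @contX _ 2 cu; have c3u := @contX _ 3 cu; have c4u := @contX _ 4 cu.
have c2w := @contX _ 2 cw; have c3w := @contX _ 3 cw; have c4w := @contX _ 4 cw.
apply: cD; apply: cM; try apply: cC.
  apply: cD; [apply: cD|]; (apply: cM; [|apply: cC]) => //; exact: cM.
apply: cD; [apply: cD; [apply: cD; [apply: cD|]|]|].
- by apply: cM; [|apply: cC].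
- apply: cM; [|apply: cC]; apply: cM => //; apply: cM => //; exact: cC.
- apply: cM; [|apply: cC]; apply: cM => //; apply: cM => //; exact: cC.
- apply: cM; [|apply: cC]; apply: cM => //; apply: cM => //; exact: cC.
- by apply: cM; [|apply: cC].
Qed.

Lemma cont_sin_shift (th k : R) : continuous (fun t => sin (th - t) / k).
Proof.
have h1 : continuous (fun t : R => th - t).
  by move=> t; apply: (@cvgB _ R^o); [exact: cvg_cst|exact: cvg_id].
have h2 : continuous (fun t => sin (th - t)).
  by move=> t; exact: (@continuous_comp _ _ _ (fun t => th - t) sin t (h1 t) (@continuous_sin R _)).
move=> t; apply: cvgM; [exact: h2 | exact: cvg_cst].
Qed.

Lemma cont_sin_div (k : R) : continuous (fun t => sin t / k).
Proof.
move=> t; apply: cvgM; [exact: continuous_sin | exact: cvg_cst].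
Qed.

End Cont.
Unset Implicit Arguments.
Local Close Scope classical_set_scope.
Theorem lemma9 (R : realType) (n : nat) (A : 'M[R]_n) (beta nu : R)
  (z0 : 'cV[R]_n) :
  A^T = A -> 0 < beta -> 0 < nu -> nu <= 1 -> on_sphere z0 ->
  (forall z, region z0 nu z ->
     forall v, tangent z v -> v != 0 -> 0 < hessf A beta z v) ->
  forall z1 z2,
    local_minimizer (region z0 nu) (fobj A beta) z1 ->
    local_minimizer (region z0 nu) (fobj A beta) z2 ->
    z1 = z2.
Proof.
move=> _ hb hnu hnu1 /on_sphereE hz0 hH z1 z2 [R1 [e1 [he1 M1]]] [R2 [e2 [he2 M2]]].
case: (eqVneq z1 z2) => // hne; exfalso.
have [n1 q1] := (region_iff nu z1 hz0).1 R1.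
have [n2 q2] := (region_iff nu z2 hz0).1 R2.
have c1 : dot z1 z2 < 1.
  rewrite ltNge; apply/negP => hc.
  have h0 : dot (z1 - z2) (z1 - z2) = 0.
    apply/eqP; rewrite eq_le dot_ge0 andbT dot_sub n1 n2; lra.
  by move/eqP: hne; apply; apply/eqP; rewrite -subr_eq0; apply/eqP; apply: dot_eq0.
have cm1 : -1 < dot z1 z2.
  rewrite ltNge; apply/negP => hc.
  have h0 : dot (1 *: z1 + 1 *: z2) (1 *: z1 + 1 *: z2) = 0.
    apply/eqP; rewrite eq_le dot_ge0 andbT dot_comb n1 n2; lra.
  have := dot_combl 1 1 z1 z2 z0; rewrite (dot_eq0 h0) dot0l; lra.
pose th := acos (dot z1 z2).
have hcb : -1 <= dot z1 z2 <= 1 by rewrite !ltW.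
have hcos : cos th = dot z1 z2 by rewrite /th acosK // in_itv /= hcb.
have th0 : 0 < th by rewrite /th acos_gt0 // ltW // c1.
have thpi : th < pi by rewrite /th acos_ltpi // cm1 ltW.
have hs0 : 0 < sin th by apply: sin_gt0_pi; rewrite th0 thpi.
have s0 : sin th != 0 by rewrite gt_eqF.
pose g t := ga th t *: z1 + gb th t *: z2.
pose g' t := ga' th t *: z1 + gb' th t *: z2.
pose h t := fobj A beta (g t).
have gnorm t : dot (g t) (g t) = 1 by rewrite dot_comb n1 n2 -hcos arc_norm.
have gdnorm t : dot (g' t) (g' t) = 1 by rewrite dot_comb n1 n2 -hcos arc_dnorm.
have gorth t : dot (g' t) (g t) = 0 by rewrite dot_comb n1 n2 -hcos arc_orth.
have gz1 t : dot (g t) z1 = cos t by rewrite dot_combl n1 dotC -hcos arc_dz1.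
have gz2 t : dot (g t) z2 = cos (th - t) by rewrite dot_combl n2 -hcos arc_dz2.
have g0 : g 0 = z1 by rewrite /g ga0 // gb0 scale1r scale0r addr0.
have gth : g th = z2 by rewrite /g gath gbth // scale1r scale0r add0r.
have gin t : 0 <= t <= th -> region z0 nu (g t).
  move=> /andP [t0 tth]; apply/(region_iff nu _ hz0); split => //.
  have ha : 0 <= ga th t.
    rewrite /ga; apply: divr_ge0; last exact: ltW.
    apply: sin_ge0_pi; apply/andP; split; first lra.
    have := ltW thpi; lra.
  have hb' : 0 <= gb th t.
    rewrite /gb; apply: divr_ge0; last exact: ltW.
    by apply: sin_ge0_pi; rewrite t0 /= (le_trans tth (ltW thpi)).
  have hn := gnorm t; rewrite dot_comb n1 n2 in hn.
  have hab : 1 <= ga th t + gb th t.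
    have hc' : ga th t * gb th t * dot z1 z2 <= ga th t * gb th t.
      have := mulr_ge0 ha hb'; nra.
    nra.
  rewrite dot_combl.
  have hm : 0 < 1 - nu / 2 by lra.
  nra.
have hcont : continuous h.
  have -> : h = (fun t => (ga th t ^+ 2 * bil A z1 z1 + ga th t * gb th t * (bil A z1 z2 + bil A z2 z1)
     + gb th t ^+ 2 * bil A z2 z2) / 2
     + beta / 2 * (ga th t ^+ 4 * q4 z1 z2 4 + 4 * ga th t ^+ 3 * gb th t * q4 z1 z2 3
     + 6 * ga th t ^+ 2 * gb th t ^+ 2 * q4 z1 z2 2
     + 4 * ga th t * gb th t ^+ 3 * q4 z1 z2 1 + gb th t ^+ 4 * q4 z1 z2 0)).
    by apply: funext => t; rewrite /h /g fobj_comb.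
  apply: cont_poly; [exact: cont_sin_shift | exact: cont_sin_div].
have [tM tMin tMmax] := EVT_max (ltW th0) (continuous_subspaceT hcont).
have hmax t : 0 <= t <= th -> h t <= h tM.
  by move=> ht; apply: tMmax; rewrite in_itv /=.
move: tMin; rewrite in_itv /= => /andP [tM0 tMth].
have [ts /andP [ts0 tsth] tsmax] : exists2 ts, 0 < ts < th & forall t, 0 <= t <= th -> h t <= h ts.
  case: (eqVneq tM 0) => [E0 | N0].
    have e0 : 0 < e1 ^+ 2 / 2 by rewrite divr_gt0 // exprn_gt0.
    have [d d0 hd] := near0 (@continuous_cos R 0) e0.
    pose t1 := Num.min d th / 2.
    have hmin0 : 0 < Num.min d th by rewrite lt_min d0 th0.
    have hmin1 : Num.min d th <= d by rewrite ge_min lexx.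
    have hmin2 : Num.min d th <= th by rewrite ge_min lexx orbT.
    have t10 : 0 < t1 by rewrite /t1 divr_gt0.
    have t1th : t1 < th by rewrite /t1; lra.
    exists t1; first by rewrite t10 t1th.
    have hle : h 0 <= h t1.
      rewrite /h g0; apply: M1; first by apply: gin; rewrite ltW // ltW.
      apply: enorm_lt => //; rewrite dot_sub gnorm n1 gz1.
      have := hd t1; rewrite cos0 gtr0_norm // => /(_ ltac:(rewrite /t1; lra)).
      rewrite ltr_norml => /andP [hl hr]; lra.
    move=> t ht; apply: (le_trans (hmax t ht)); rewrite E0; exact: hle.
  case: (eqVneq tM th) => [Eth | Nth].
    have e0 : 0 < e2 ^+ 2 / 2 by rewrite divr_gt0 // exprn_gt0.
    have [d d0 hd] := near0 (@continuous_cos R 0) e0.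
    pose t1 := th - Num.min d th / 2.
    have hmin0 : 0 < Num.min d th by rewrite lt_min d0 th0.
    have hmin1 : Num.min d th <= d by rewrite ge_min lexx.
    have hmin2 : Num.min d th <= th by rewrite ge_min lexx orbT.
    have t10 : 0 < t1 by rewrite /t1; lra.
    have t1th : t1 < th by rewrite /t1; lra.
    exists t1; first by rewrite t10 t1th.
    have hle : h th <= h t1.
      rewrite /h gth; apply: M2; first by apply: gin; rewrite ltW // ltW.
      apply: enorm_lt => //; rewrite dot_sub gnorm n2 gz2.
      have hu : th - t1 = Num.min d th / 2 by rewrite /t1; ring.
      have := hd (th - t1); rewrite cos0 hu gtr0_norm ?divr_gt0 // => /(_ ltac:(lra)).
      rewrite ltr_norml => /andP [hl hr]; lra.
    move=> t ht; apply: (le_trans (hmax t ht)); rewrite Eth; exact: hle.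
  exists tM => //.
  have a1 : 0 < tM by rewrite lt_neqAle tM0 andbT eq_sym.
  have a2 : tM < th by rewrite lt_neqAle tMth andbT.
  by rewrite a1 a2.
pose z := g ts; pose v := g' ts.
have zin : region z0 nu z by apply: gin; rewrite !ltW.
have vt : tangent z v by apply/tangentE; exact: gorth.
have vnz : v != 0.
  apply/eqP => v0; have := gdnorm ts; rewrite -/v v0 dot0l => /eqP.
  by rewrite eq_sym oner_eq0.
have hK := hH z zin v vt vnz.
set K := hessf A beta z v in hK.
set Q := q4 z v 4 - 6 * q4 z v 2 + q4 z v 0.
have hQ0 : 0 < `|Q| + 1 by have := normr_ge0 Q; lra.
have hQ1 : 0 < beta * (`|Q| + 1) by rewrite mulr_gt0.
pose e := Num.min 1 (K / (beta * (`|Q| + 1))).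
have e0 : 0 < e by rewrite lt_min ltr01 divr_gt0.
have e1' : e <= 1 by rewrite ge_min lexx.
have e2' : e <= K / (beta * (`|Q| + 1)) by rewrite ge_min lexx orbT.
have [d d0 hd] := near0 (@continuous_sin R 0) e0.
pose m := Num.min d (Num.min ts (th - ts)).
have m0 : 0 < m by rewrite !lt_min d0 ts0 subr_gt0 tsth.
have md : m <= d by rewrite ge_min lexx.
have mts : m <= ts by rewrite !ge_min lexx orbT.
have mth : m <= th - ts by rewrite !ge_min lexx !orbT.
pose r := m / 2.
have r0 : 0 < r by rewrite divr_gt0.
have sr0 : 0 < sin r by apply: sin_gt0_pi; rewrite r0 /=; rewrite /r; lra.
have sre : sin r < e.
  have := hd r; rewrite sin0 subr0 gtr0_norm // => /(_ ltac:(rewrite /r; lra)).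
  by rewrite gtr0_norm.
have hp1 : h (ts + r) <= h ts by apply: tsmax; apply/andP; split; rewrite /r; lra.
have hp2 : h (ts - r) <= h ts by apply: tsmax; apply/andP; split; rewrite /r; lra.
have E1 : g (ts + r) = cos r *: z + sin r *: v.
  by rewrite /g (ga_shiftD s0) (gb_shiftD s0) /z /v /g /g' comb_shift.
have E2 : g (ts - r) = cos r *: z + (- sin r) *: v.
  by rewrite /g (ga_shiftB s0) (gb_shiftB s0) /z /v /g /g' comb_shift.
have key := key_identity A beta z (v:=v) (cos2Dsin2 r) (gdnorm ts).
have hp : h (ts + r) + h (ts - r) - 2 * h ts <= 0 by lra.
rewrite /h E1 E2 -/(g ts) -/z key -/K -/Q in hp.
have s2 : sin r ^+ 2 < K / (beta * (`|Q| + 1)).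
  apply: (lt_le_trans _ e2'); rewrite expr2.
  by apply: (lt_le_trans (y := sin r * 1)); [rewrite ltr_pM2l //; lra | rewrite mulr1 ltW].
rewrite ltr_pdivlMr // in s2.
have hQ : - `|Q| <= Q by have := lexx `|Q|; rewrite ler_norml => /andP [].
have hs2 : 0 < sin r ^+ 2 by rewrite exprn_gt0.
have t1 : beta * sin r ^+ 2 * (- `|Q|) <= beta * sin r ^+ 2 * Q.
  by rewrite ler_wpM2l // mulr_ge0 // ltW.
have eq1 : sin r ^+ 2 * (beta * (`|Q| + 1)) = beta * sin r ^+ 2 * `|Q| + beta * sin r ^+ 2 by ring.
have eq2 : beta * sin r ^+ 2 * (- `|Q|) = - (beta * sin r ^+ 2 * `|Q|) by ring.
have bs : 0 < beta * sin r ^+ 2 by rewrite mulr_gt0.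
rewrite eq1 in s2; rewrite eq2 in t1.
have pos : 0 < K + beta * sin r ^+ 2 * Q by lra.
have := mulr_gt0 hs2 pos; lra.
Qed.
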